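(* Let $\mu_1,\mu_2>0$ with $\mu_1+\mu_2=1$ and $\mu_1\le\mu_2$. Put $$e=\frac{\sqrt{(\mu_1/\mu_2)^4+8(\mu_1/\mu_2)^2}-(\mu_1/\mu_2)^2}{4},\qquad \sigma=\sigma(\mu_1,\mu_2)=-\frac{(1-e^2)(\mu_1^2+\mu_2^2e)^2}{2\mu_2e^2}.$$ Consider the planar orbital dynamics described in the context, started from two intersecting elliptic co-focal Keplerian orbits $o_1,o_2$ with $E<0$. If initially $EL^2<\sigma$, then for every possible evolution (every choice of collision points, impact directions $\mathbf n$ and number of collisions) the orbits remain elliptic for all times. Moreover, along every evolution $|L_1|$ and $|L_2|$ stay bounded and $e_i\le c_i<1$ ($i=1,2$) for suitable constants $c_1,c_2$.
   Context: Units are chosen so that a particle at position $\mathbf x\in\mathbb R^2\setminus\{0\}$ undergoes Keplerian motion about the origin with acceleration $-\mathbf x/|\mathbf x|^3$. For a particle $i$ at position $\mathbf x_i$ with velocity $\mathbf v_i$, its specific energy is $E_i=|\mathbf v_i|^2/2-1/|\mathbf x_i|$, its (signed) specific angular momentum is $L_i=x_{i,1}v_{i,2}-x_{i,2}v_{i,1}$, and its eccentricity is $e_i=\sqrt{1+2E_iL_i^2}$; these are constant along the Keplerian orbit $o_i$ determined by $(\mathbf x_i,\mathbf v_i)$, which is elliptic iff $E_i<0$. Two point particles have masses $m_1,m_2$, $M=m_1+m_2$, $\mu_i=m_i/M$. Set $E=\mu_1E_1+\mu_2E_2$ and $L=\mu_1L_1+\mu_2L_2$. Orbital dynamics: the state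 is a pair of coplanar Keplerian orbits $o_1,o_2$ with common focus at the origin that intersect. One step: choose a point $\mathbf x$ of $o_1\cap o_2$; let $\mathbf v_1,\mathbf v_2$ be the velocities of particles moving on $o_1,o_2$ when at $\mathbf x$; choose a unit vector $\mathbf n$ with $\mathbf n\cdot\mathbf w<0$ where $\mathbf w=\mathbf v_1-\mathbf v_2$; set $\mathbf w'=(I-\mathbf n\otimes\mathbf n)\mathbf w-(1-2\varepsilon)(\mathbf n\otimes\mathbf n)\mathbf w$ with inelasticity parameter $\varepsilon\in[0,1/2]$ ($\varepsilon=0$: elastic collision), where $(\mathbf n\otimes\mathbf n)\mathbf w=(\mathbf n\cdot\mathbf w)\mathbf n$; with $\mathbf v=\mu_1\mathbf v_1+\mu_2\mathbf v_2$ set $\mathbf v_1'=\mathbf v+\mu_2\mathbf w'$, $\mathbf v_2'=\mathbf v-\mu_1\mathbf w'$. The new orbits $o_1',o_2'$ are the Keplerian orbits through $\mathbf x$ with velocities $\mathbf v_1',\mathbf v_2'$. Steps are iterated arbitrarily. The total $L$ is conserved and $E$ does not increase at each step. *)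

(* Defs.v *)
From Stdlib Require Import Reals.
From Coquelicot Require Import Coquelicot.
Open Scope R_scope.

Definition vec := (R * R)%type.
Definition dot (a b : vec) : R := fst a * fst b + snd a * snd b.
Definition vnorm (a : vec) : R := sqrt (dot a a).
Definition vadd (a b : vec) : vec := (fst a + fst b, snd a + snd b).
Definition vsub (a b : vec) : vec := (fst a - fst b, snd a - snd b).
Definition vscale (c : R) (a : vec) : vec := (c * fst a, c * snd a).

Definition energy (x v : vec) : R := dot v v / 2 - 1 / vnorm x.
Definition angmom (x v : vec) : R := fst x * snd v - snd x * fst v.
Definition ecc (x v : vec) : R := sqrt (1 + 2 * energy x v * (angmom x v) ^ 2).

Definition kepler_solution (y1 y2 u1 u2 : R -> R) (a b : R) : Prop :=
  forall t, a < t < b ->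
    (y1 t, y2 t) <> (0, 0) /\
    is_derive y1 t (u1 t) /\ is_derive y2 t (u2 t) /\
    is_derive u1 t (- y1 t / (vnorm (y1 t, y2 t)) ^ 3) /\
    is_derive u2 t (- y2 t / (vnorm (y1 t, y2 t)) ^ 3).

(* The Keplerian orbit determined by (x,v), as a set of phase points:
   [on_orbit x v y u] means a particle moving on that orbit is at position y
   with velocity u at some time.  The orbit (as a curve) is the set of such y,
   and u is "the velocity of a particle moving on the orbit when at y". *)
Definition on_orbit (x v : vec) (y u : vec) : Prop :=
  exists (a b t : R) (y1 y2 u1 u2 : R -> R),
    a < 0 < b /\ a < t < b /\ kepler_solution y1 y2 u1 u2 a b /\
    (y1 0, y2 0) = x /\ (u1 0, u2 0) = v /\
    (y1 t, y2 t) = y /\ (u1 t, u2 t) = u.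

(* A state: the orbits o1, o2 are represented by phase points (x_i, v_i). *)
Record state := mkState { x1 : vec; v1 : vec; x2 : vec; v2 : vec }.

Definition En1 (s : state) := energy (x1 s) (v1 s).
Definition En2 (s : state) := energy (x2 s) (v2 s).
Definition Lm1 (s : state) := angmom (x1 s) (v1 s).
Definition Lm2 (s : state) := angmom (x2 s) (v2 s).
Definition ecc1 (s : state) := ecc (x1 s) (v1 s).
Definition ecc2 (s : state) := ecc (x2 s) (v2 s).
Definition Etot (mu1 mu2 : R) (s : state) := mu1 * En1 s + mu2 * En2 s.
Definition Ltot (mu1 mu2 : R) (s : state) := mu1 * Lm1 s + mu2 * Lm2 s.

Definition orbits_intersect (s : state) : Prop :=
  exists y u1 u2, on_orbit (x1 s) (v1 s) y u1 /\ on_orbit (x2 s) (v2 s) y u2.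

Definition collision_step (mu1 mu2 eps : R) (s s' : state) : Prop :=
  exists (y u1 u2 n : vec),
    on_orbit (x1 s) (v1 s) y u1 /\ on_orbit (x2 s) (v2 s) y u2 /\
    dot n n = 1 /\ dot n (vsub u1 u2) < 0 /\
    let w := vsub u1 u2 in
    let w' := vsub (vsub w (vscale (dot n w) n))
                   (vscale (1 - 2 * eps) (vscale (dot n w) n)) in
    let v := vadd (vscale mu1 u1) (vscale mu2 u2) in
    s' = mkState y (vadd v (vscale mu2 w')) y (vsub v (vscale mu1 w')).

Inductive reachable (mu1 mu2 eps : R) (s0 : state) : state -> Prop :=
  | reach_refl : reachable mu1 mu2 eps s0 s0
  | reach_step : forall s s', reachable mu1 mu2 eps s0 s ->
      collision_step mu1 mu2 eps s s' -> reachable mu1 mu2 eps s0 s'.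

Definition e_crit (mu1 mu2 : R) : R :=
  let r := mu1 / mu2 in (sqrt (r ^ 4 + 8 * r ^ 2) - r ^ 2) / 4.

Definition sigma_crit (mu1 mu2 : R) : R :=
  let e := e_crit mu1 mu2 in
  - ((1 - e ^ 2) * (mu1 ^ 2 + mu2 ^ 2 * e) ^ 2) / (2 * mu2 * e ^ 2).

(* Main.v *)
Require Import Defs.
From Stdlib Require Import Reals Lra Psatz.
From Coquelicot Require Import Coquelicot.
Open Scope R_scope.

Lemma const_on (f : R -> R) (a b t : R) :
  (forall s, a < s < b -> is_derive f s 0) -> a < 0 < b -> a < t < b -> f t = f 0.
Proof.
  intros Hd H0 Ht.
  destruct (MVT_gen f 0 t (fun _ => 0)) as [c [_ Hc]].
  - intros x Hx. apply Hd. unfold Rmin, Rmax in Hx; destruct (Rle_dec 0 t); lra.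
  - intros x Hx. apply continuity_pt_filterlim. apply (ex_derive_continuous (K:=R_AbsRing) (V:=R_NormedModule)).
    exists 0. apply Hd. unfold Rmin, Rmax in Hx; destruct (Rle_dec 0 t); lra.
  - lra.
Qed.

Lemma kepler_conserve (y1 y2 u1 u2 : R -> R) (a b t : R) :
  kepler_solution y1 y2 u1 u2 a b -> a < 0 < b -> a < t < b ->
  energy (y1 t, y2 t) (u1 t, u2 t) = energy (y1 0, y2 0) (u1 0, u2 0) /\
  angmom (y1 t, y2 t) (u1 t, u2 t) = angmom (y1 0, y2 0) (u1 0, u2 0).
Proof.
  intros Hk H0 Ht. unfold energy, angmom, vnorm, dot; simpl.
  split.
  - apply (const_on (fun s => (u1 s * u1 s + u2 s * u2 s) / 2 -
       1 / sqrt (y1 s * y1 s + y2 s * y2 s)) a b t); auto.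
    intros s Hs. destruct (Hk s Hs) as (Hnz & D1 & D2 & D3 & D4).
    unfold vnorm, dot in D3, D4; simpl in D3, D4.
    assert (Hp : 0 < y1 s * y1 s + y2 s * y2 s).
    { destruct (Req_dec (y1 s) 0); destruct (Req_dec (y2 s) 0).
      - exfalso; apply Hnz; subst; f_equal; auto.
      - nra. - nra. - nra. }
    auto_derive.
    + repeat split; try (eexists; eassumption); try lra.
      apply Rgt_not_eq, sqrt_lt_R0; lra.
    + assert (E3 : Derive (fun x : R => u1 x) s = - y1 s / sqrt (y1 s * y1 s + y2 s * y2 s) ^ 3) by (apply is_derive_unique; exact D3).
      assert (E4 : Derive (fun x : R => u2 x) s = - y2 s / sqrt (y1 s * y1 s + y2 s * y2 s) ^ 3) by (apply is_derive_unique; exact D4).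
      assert (E1 : Derive (fun x : R => y1 x) s = u1 s) by (apply is_derive_unique; exact D1).
      assert (E2 : Derive (fun x : R => y2 x) s = u2 s) by (apply is_derive_unique; exact D2).
      rewrite E1, E2, E3, E4.
      set (q := y1 s * y1 s + y2 s * y2 s) in *.
      assert (Hsq : 0 < sqrt q) by (apply sqrt_lt_R0; lra).
      field. lra.
  - apply (const_on (fun s => y1 s * u2 s - y2 s * u1 s) a b t); auto.
    intros s Hs. destruct (Hk s Hs) as (Hnz & D1 & D2 & D3 & D4).
    unfold vnorm, dot in D3, D4; simpl in D3, D4.
    assert (Hp : 0 < y1 s * y1 s + y2 s * y2 s).
    { destruct (Req_dec (y1 s) 0); destruct (Req_dec (y2 s) 0).
      - exfalso; apply Hnz; subst; f_equal; auto.
      - nra. - nra. - nra. }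
    auto_derive.
    + repeat split; try (eexists; eassumption).
    + assert (E3 : Derive (fun x : R => u1 x) s = - y1 s / sqrt (y1 s * y1 s + y2 s * y2 s) ^ 3) by (apply is_derive_unique; exact D3).
      assert (E4 : Derive (fun x : R => u2 x) s = - y2 s / sqrt (y1 s * y1 s + y2 s * y2 s) ^ 3) by (apply is_derive_unique; exact D4).
      assert (E1 : Derive (fun x : R => y1 x) s = u1 s) by (apply is_derive_unique; exact D1).
      assert (E2 : Derive (fun x : R => y2 x) s = u2 s) by (apply is_derive_unique; exact D2).
      rewrite E1, E2, E3, E4.
      set (q := y1 s * y1 s + y2 s * y2 s) in *.
      assert (Hsq : 0 < sqrt q) by (apply sqrt_lt_R0; lra).
      field. lra.
Qed.

Definition Eh (m n a1 b1 a2 b2 : R) := m*((a1^2+b1^2)/2-1) + n*((a2^2+b2^2)/2-1).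
Definition Lh (m n a1 a2 : R) := m*a1+n*a2.

Lemma Gmin (m n s z : R) : 0 < m -> 0 < n -> 0 <= s -> 0 <= z ->
  2*n*z^2 + m*z - n = 0 -> (z^2-1)*(m+n*z)^2 <= (s^2-1)*(m+n*s)^2.
Proof.
  intros Hm Hn Hs Hz C.
  assert (Id : (s^2-1)*(m+n*s)^2 - (z^2-1)*(m+n*z)^2 =
    (s-z)^2 * (n^2*s^2 + (2*m*n+2*z*n^2)*s + (m^2 - n^2 + 4*m*n*z + 3*n^2*z^2))
    + ((2*n*z+2*m)*s - 2*n*z^2 - 2*m*z) * (2*n*z^2 + m*z - n)) by ring.
  rewrite C, Rmult_0_r, Rplus_0_r in Id.
  assert (Hq : 0 <= m^2 - n^2 + 4*m*n*z + 3*n^2*z^2).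
  { assert (H2 : 2*n*z^2 = n - m*z) by lra.
    assert (H3 : n^2*z^2 = n*(n-m*z)/2) by (rewrite <- H2; field).
    assert (E : m^2 - n^2 + 4*m*n*z + 3*n^2*z^2 = m^2 + n^2/2 + 5/2*(m*n)*z).
    { replace (3*n^2*z^2) with (3*(n^2*z^2)) by ring. rewrite H3. field. }
    rewrite E. assert (0 <= m*n*z) by (apply Rmult_le_pos; nra). nra. }
  assert (0 <= (s-z)^2) by apply pow2_ge_0.
  assert (0 <= n^2*s^2 + (2*m*n+2*z*n^2)*s + (m^2 - n^2 + 4*m*n*z + 3*n^2*z^2)).
  { assert (0 <= n^2*s^2) by (apply Rmult_le_pos; apply pow2_ge_0).
    assert (0 <= (2*m*n+2*z*n^2)*s) by (apply Rmult_le_pos; nra). lra. }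
  assert (0 <= (s-z)^2 * (n^2*s^2 + (2*m*n+2*z*n^2)*s + (m^2 - n^2 + 4*m*n*z + 3*n^2*z^2))) by (apply Rmult_le_pos; auto).
  lra.
Qed.

Lemma sigma_eq (mu1 mu2 : R) : 0 < mu1 -> 0 < mu2 ->
  exists z, 0 <= z /\ 2*mu2*z^2 + mu1*z - mu2 = 0 /\
    sigma_crit mu1 mu2 = 2*mu2*((z^2-1)*(mu1+mu2*z)^2).
Proof.
  intros H1 H2.
  unfold sigma_crit, e_crit.
  set (r := mu1/mu2).
  assert (Hr : 0 < r) by (unfold r; apply Rdiv_lt_0_compat; lra).
  assert (Hm1 : mu1 = r*mu2) by (unfold r; field; lra).
  set (S := sqrt (r^4 + 8*r^2)).
  assert (HS2 : S*S = r^4+8*r^2) by (unfold S; apply sqrt_sqrt; nra).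
  assert (HS0 : 0 <= S) by (unfold S; apply sqrt_pos).
  assert (HS : r^2 < S) by nra.
  set (e := (S - r^2)/4).
  assert (He : 0 < e) by (unfold e; lra).
  assert (Ce : 2*e^2 + e*r^2 - r^2 = 0) by (unfold e; nra).
  exists (e/r). split; [apply Rlt_le, Rdiv_lt_0_compat; lra|].
  assert (Cz : 2*(e/r)^2 + r*(e/r) - 1 = 0).
  { replace (2*(e/r)^2 + r*(e/r) - 1) with ((2*e^2 + e*r^2 - r^2)/r^2) by (field; lra).
    rewrite Ce; field; lra. }
  split.
  - rewrite Hm1. replace (2 * mu2 * (e / r) ^ 2 + r * mu2 * (e / r) - mu2) with
      (mu2*(2*(e/r)^2 + r*(e/r) - 1)) by ring. rewrite Cz; ring.
  - fold e. set (z := e/r) in *.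
    assert (Hez : e = r*z) by (unfold z; field; lra).
    assert (Hz : 0 < z) by (unfold z; apply Rdiv_lt_0_compat; lra).
    rewrite Hez, Hm1.
    assert (Rz : (r*z)^2 = (1-2*z^2)^2) by (assert (r*z = 1-2*z^2) by lra; rewrite H; ring).
    transitivity (-(1-(r*z)^2)*mu2^3*(r+z)^2/(2*z^2)); [field; lra|].
    rewrite Rz. field. lra.
Qed.

Lemma keycore (m n Eh0 L0 Elow Z : R) : 0 < m -> 0 < n ->
  Elow <= Eh0 -> Elow = n*(Z^2/2-1) -> 0 <= Z -> L0^2 <= (m*sqrt 2+n*Z)^2 -> Eh0 < 0 ->
  exists s, 0 <= s <= 1 /\ 2*n*((s^2-1)*(m+n*s)^2) <= Eh0*L0^2.
Proof.
  intros Hm Hn Hle HE HZ HL HEh.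
  set (k := sqrt 2) in *.
  assert (Hk2 : k*k = 2) by (unfold k; apply sqrt_sqrt; lra).
  assert (Hk : 0 < k) by (unfold k; apply sqrt_lt_R0; lra).
  assert (HZ2 : Z^2 < 2) by nra.
  assert (HZk : Z < k) by nra.
  exists (Z/k). split.
  { split. apply Rmult_le_pos; [lra| apply Rlt_le, Rinv_0_lt_compat; lra].
    apply Rmult_le_reg_r with k; [lra|]. field_simplify; lra. }
  assert (Elow < 0) by lra.
  replace (2*n*(((Z/k)^2-1)*(m+n*(Z/k))^2)) with (Elow*(m*k+n*Z)^2).
  2:{ rewrite HE. assert (HZs : Z = k*(Z/k)) by (field; lra).
      set (s := Z/k) in *. clearbody s. rewrite HZs.
      transitivity (n*((k*k)*s^2/2-1)*((k*k)*(m+n*s)^2)); [field|].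
      rewrite Hk2. field. }
  assert (0 <= L0^2) by apply pow2_ge_0.
  assert (Elow*L0^2 <= Eh0*L0^2) by (apply Rmult_le_compat_r; lra).
  assert (Elow*(m*k+n*Z)^2 <= Elow*L0^2) by (apply Rmult_le_compat_neg_l; lra).
  lra.
Qed.

Lemma keygen (m n a1 b1 a2 b2 : R) : 0 < m -> 0 < n -> m + n = 1 ->
  0 <= (a1^2+b1^2)/2-1 -> Eh m n a1 b1 a2 b2 < 0 ->
  exists s, 0 <= s <= 1 /\ 2*n*((s^2-1)*(m+n*s)^2) <= Eh m n a1 b1 a2 b2 * (Lh m n a1 a2)^2.
Proof.
  intros Hm Hn Hmn H1 HE.
  set (k := sqrt 2).
  assert (Hk2 : k*k = 2) by (unfold k; apply sqrt_sqrt; lra).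
  assert (Hk : 0 < k) by (unfold k; apply sqrt_lt_R0; lra).
  set (X := Rabs a1). set (Y := Rabs a2).
  assert (HX : X^2 = a1^2) by (unfold X; apply pow2_abs).
  assert (HY : Y^2 = a2^2) by (unfold Y; apply pow2_abs).
  assert (HX0 : 0 <= X) by (unfold X; apply Rabs_pos).
  assert (HY0 : 0 <= Y) by (unfold Y; apply Rabs_pos).
  assert (HLa : Rabs (Lh m n a1 a2) <= m*X+n*Y).
  { unfold Lh, X, Y. eapply Rle_trans; [apply Rabs_triang|].
    rewrite !Rabs_mult, (Rabs_pos_eq m), (Rabs_pos_eq n); lra. }
  assert (HL : (Lh m n a1 a2)^2 <= (m*X+n*Y)^2).
  { rewrite <- pow2_abs. assert (0 <= Rabs (Lh m n a1 a2)) by apply Rabs_pos.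
    nra. }
  assert (Hb1 : 0 <= b1^2) by apply pow2_ge_0.
  assert (Hb2 : 0 <= b2^2) by apply pow2_ge_0.
  destruct (Rle_dec (X^2) 2) as [Hc|Hc].
  - apply (keycore m n _ _ (n*(Y^2/2-1)) Y); auto.
    + unfold Eh. rewrite HY. nra.
    + assert (X <= k) by nra. eapply Rle_trans; [exact HL|].
      assert (m*X <= m*k) by (apply Rmult_le_compat_l; lra).
      assert (0 <= m*X) by (apply Rmult_le_pos; lra).
      assert (0 <= n*Y) by (apply Rmult_le_pos; lra).
      fold k; apply pow_incr; lra.
  - apply Rnot_le_lt in Hc. assert (HD : 0 < X^2 - 2) by lra.
    set (Y' := sqrt (Y^2 + m*(X^2-2)/n)).
    assert (Hp : 0 <= Y^2 + m*(X^2-2)/n).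
    { assert (0 <= m*(X^2-2)/n) by (apply Rmult_le_pos; [nra| apply Rlt_le, Rinv_0_lt_compat; lra]). nra. }
    assert (HY'2 : Y'*Y' = Y^2 + m*(X^2-2)/n) by (unfold Y'; apply sqrt_sqrt; auto).
    assert (HY'0 : 0 <= Y') by (unfold Y'; apply sqrt_pos).
    assert (HElow : m*(X^2/2-1) + n*(Y^2/2-1) <= Eh m n a1 b1 a2 b2) by (unfold Eh; rewrite HX, HY; nra).
    assert (HEq : m*(X^2/2-1) + n*(Y^2/2-1) = n*(Y'^2/2-1)).
    { replace (Y'^2) with (Y'*Y') by ring. rewrite HY'2. field. lra. }
    apply (keycore m n _ _ (m*(X^2/2-1) + n*(Y^2/2-1)) Y'); auto.
    assert (Hneg : n*(Y'^2/2-1) < 0) by lra.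
    assert (HY'sq : Y'^2/2 - 1 < 0).
    { destruct (Rlt_dec (Y'^2/2-1) 0); auto. exfalso.
      assert (0 <= n*(Y'^2/2-1)) by (apply Rmult_le_pos; lra). lra. }
    assert (HY'k : Y' < k).
    { destruct (Rlt_dec Y' k); auto. exfalso.
      assert (k*k <= Y'*Y') by (apply Rmult_le_compat; lra). 
      replace (Y'^2) with (Y'*Y') in HY'sq by ring. lra. }
    assert (Hmd : 0 <= m*(X^2-2)/n) by (apply Rmult_le_pos; [apply Rmult_le_pos; lra| apply Rlt_le, Rinv_0_lt_compat; lra]).
    assert (HYY' : Y <= Y').
    { destruct (Rle_dec Y Y'); auto. exfalso.
      assert (Y'*Y' < Y*Y) by (apply Rmult_le_0_lt_compat; lra).
      replace (Y^2) with (Y*Y) in HY'2 by ring. lra. }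
    assert (HXk : k < X).
    { destruct (Rlt_dec k X); auto. exfalso.
      assert (X*X <= k*k) by (apply Rmult_le_compat; lra).
      replace (X^2) with (X*X) in HD by ring. lra. }
    assert (A1 : (X-k)*(X+k) = X^2-2) by (replace (X^2) with (X*X) by ring; nra).
    assert (A2 : n*(Y'-Y)*(Y'+Y) = m*(X^2-2)) by (replace (Y^2) with (Y*Y) in HY'2 by ring; field_simplify in HY'2; nra).
    assert (A3 : (X-k)*(2*k) <= X^2-2) by nra.
    assert (A4 : m*(X^2-2) <= n*(Y'-Y)*(2*k)).
    { rewrite <- A2. apply Rmult_le_compat_l; [apply Rmult_le_pos; lra| lra]. }
    assert (A3' : m*((X-k)*(2*k)) <= m*(X^2-2)) by (apply Rmult_le_compat_l; lra).
    assert (A5 : m*(X-k) <= n*(Y'-Y)).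
    { apply Rmult_le_reg_r with (2*k); [lra|]. rewrite Rmult_assoc. lra. }
    eapply Rle_trans; [exact HL|].
    assert (0 <= m*X) by (apply Rmult_le_pos; lra).
    assert (0 <= n*Y) by (apply Rmult_le_pos; lra).
    fold k; apply pow_incr; lra.
Qed.

Lemma azero (m n b1 a2 b2 : R) : 0 < m -> 0 < n -> m + n = 1 ->
  Eh m n 0 b1 a2 b2 < 0 -> -n/2 <= Eh m n 0 b1 a2 b2 * (Lh m n 0 a2)^2.
Proof.
  intros Hm Hn Hmn HE.
  assert (Hb1 : 0 <= b1^2) by apply pow2_ge_0.
  assert (Hb2 : 0 <= b2^2) by apply pow2_ge_0.
  assert (Hlow : n*a2^2/2 - 1 <= Eh m n 0 b1 a2 b2) by (unfold Eh; nra).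
  assert (HL : (Lh m n 0 a2)^2 = n^2*a2^2) by (unfold Lh; ring).
  rewrite HL.
  assert (Hu : 0 <= n^2*a2^2) by (apply Rmult_le_pos; apply pow2_ge_0).
  assert ((n*a2^2/2 - 1)*(n^2*a2^2) <= Eh m n 0 b1 a2 b2 * (n^2*a2^2)) by (apply Rmult_le_compat_r; lra).
  assert (Hsq : 0 <= n/2*(n*a2^2-1)^2) by (apply Rmult_le_pos; [lra| apply pow2_ge_0]).
  assert ((n*a2^2/2 - 1)*(n^2*a2^2) - (-n/2) = n/2*(n*a2^2-1)^2) by (field).
  lra.
Qed.


Lemma sig_f1 (mu1 mu2 : R) (H1 : 0 < mu1) (H2 : 0 < mu2) s : 0 <= s <= 1 -> sigma_crit mu1 mu2 <= 2*mu2*((s^2-1)*(mu1+mu2*s)^2).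
Proof.
  intros Hs. destruct (sigma_eq mu1 mu2 H1 H2) as [z [Hz [Cz Eq]]].
  rewrite Eq. apply Rmult_le_compat_l; [lra|]. apply Gmin; lra.
Qed.

Lemma sig_f2 (mu1 mu2 : R) (H1 : 0 < mu1) (H2 : 0 < mu2) (H12 : mu1 + mu2 = 1) (Hle : mu1 <= mu2) s : 0 <= s <= 1 -> sigma_crit mu1 mu2 <= 2*mu1*((s^2-1)*(mu2+mu1*s)^2).
Proof.
  intros Hs.
  set (t := 1 - mu1*(1-s)/mu2).
  assert (Ht1 : mu1*(1-s)/mu2 <= 1).
  { apply Rmult_le_reg_r with mu2; [lra|]. field_simplify; nra. }
  assert (Ht0 : 0 <= mu1*(1-s)/mu2) by (apply Rmult_le_pos; [nra| apply Rlt_le, Rinv_0_lt_compat; lra]).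
  assert (Hts : s <= t).
  { unfold t. assert (mu1*(1-s)/mu2 <= 1 - s); [|lra].
    apply Rmult_le_reg_r with mu2; [lra|]. field_simplify; nra. }
  eapply Rle_trans; [apply (sig_f1 mu1 mu2 H1 H2 t); unfold t; lra|].
  assert (E1 : mu1 + mu2*t = mu2 + mu1*s) by (unfold t; field; lra).
  rewrite E1.
  assert (E2 : mu2*(1-t) = mu1*(1-s)) by (unfold t; field; lra).
  assert (E3 : mu1*(1-s^2) <= mu2*(1-t^2)).
  { replace (mu2*(1-t^2)) with (mu2*(1-t)*(1+t)) by ring. rewrite E2.
    replace (mu1*(1-s^2)) with (mu1*(1-s)*(1+s)) by ring.
    apply Rmult_le_compat_l; [nra| lra]. }
  assert (0 <= (mu2+mu1*s)^2) by apply pow2_ge_0.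
  assert (mu1*(1-s^2)*(mu2+mu1*s)^2 <= mu2*(1-t^2)*(mu2+mu1*s)^2) by (apply Rmult_le_compat_r; lra).
  nra.
Qed.

Lemma sig_half (mu1 mu2 : R) (H1 : 0 < mu1) (H2 : 0 < mu2) (H12 : mu1 + mu2 = 1) (Hle : mu1 <= mu2) : sigma_crit mu1 mu2 <= - mu2/2.
Proof.
  set (k := sqrt 2).
  assert (Hk2 : k*k = 2) by (unfold k; apply sqrt_sqrt; lra).
  assert (Hk : 0 < k) by (unfold k; apply sqrt_lt_R0; lra).
  assert (Hk1 : k < 2) by nra.
  assert (Hs : 0 <= /k <= 1).
  { split. apply Rlt_le, Rinv_0_lt_compat; lra.
    apply Rmult_le_reg_r with k; [lra|]. field_simplify; nra. }
  eapply Rle_trans; [apply (sig_f1 mu1 mu2 H1 H2 (/k) Hs)|].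
  assert (Ek : (/k)^2 = /2) by (rewrite <- Hk2; field; lra).
  rewrite Ek.
  assert (Hb : k/2 <= mu1 + mu2*/k).
  { replace (/k) with (k/2) by (apply Rmult_eq_reg_r with k; [field_simplify; [lra|lra]|lra]).
    assert (mu1*(k/2) <= mu1) by nra. nra. }
  assert (Hb2 : (k/2)^2 <= (mu1 + mu2*/k)^2) by (apply pow_incr; nra).
  assert (Ek2 : (k/2)^2 = /2) by (replace ((k/2)^2) with (k*k/4) by field; rewrite Hk2; field).
  nra.
Qed.



Lemma quant (m n S K a1 b1 a2 b2 : R) : 0 < m -> 0 < n -> m + n = 1 -> S <= 0 ->
  (forall a1 b1 a2 b2, 0 <= (a1^2+b1^2)/2-1 -> Eh m n a1 b1 a2 b2 < 0 ->
      S <= Eh m n a1 b1 a2 b2 * (Lh m n a1 a2)^2) ->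
  (forall b1 a2 b2, Eh m n 0 b1 a2 b2 < 0 -> S <= Eh m n 0 b1 a2 b2 * (Lh m n 0 a2)^2) ->
  K < S -> Eh m n a1 b1 a2 b2 < 0 -> Eh m n a1 b1 a2 b2 * (Lh m n a1 a2)^2 <= K ->
  ((a1^2+b1^2)/2-1) * a1^2 <= - (S-K)^3/1600.
Proof.
  intros Hm Hn Hmn HS P1 P2 HK HE HEL.
  set (g := S - K). assert (Hg : 0 < g) by (unfold g; lra). assert (Hgd : g = S - K) by reflexivity.
  set (E := Eh m n a1 b1 a2 b2) in *. set (L := Lh m n a1 a2) in *.
  set (E1 := (a1^2+b1^2)/2-1).
  assert (Hb1 : 0 <= b1^2) by apply pow2_ge_0.
  assert (Hb2 : 0 <= b2^2) by apply pow2_ge_0.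
  assert (Ha1 : 0 <= a1^2) by apply pow2_ge_0.
  assert (Ha2 : 0 <= a2^2) by apply pow2_ge_0.
  assert (HE1 : -1 <= E1) by (unfold E1; lra).
  assert (HEm : -1 <= E) by (unfold E, Eh; nra).
  assert (HL2 : L^2 < 2).
  { assert (L^2 = m*a1^2 + n*a2^2 - m*n*(a1-a2)^2) by (unfold L, Lh; replace n with (1-m) by lra; field).
    assert (0 <= m*n*(a1-a2)^2) by (apply Rmult_le_pos; [nra| apply pow2_ge_0]).
    unfold E, Eh in HE. nra. }
  assert (HL0 : 0 <= L^2) by apply pow2_ge_0.
  destruct (Rle_dec (E1 * a1^2) (-(g^3/1600))) as [Hd|Hd]; [lra|].
  apply Rnot_le_lt in Hd. exfalso.
  destruct (Rle_dec (-(g/4)) E1) as [Hc|Hc].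
  - destruct (Rle_dec 0 E1) as [Hc0|Hc0].
    + specialize (P1 a1 b1 a2 b2 Hc0 HE). fold E L in P1. lra.
    + apply Rnot_le_lt in Hc0.
      set (b1' := sqrt (2 - a1^2)).
      assert (Hp : 0 <= 2 - a1^2) by (unfold E1 in Hc0; lra).
      assert (Hb1' : b1'^2 = 2 - a1^2) by (unfold b1'; rewrite <- Rsqr_pow2; apply Rsqr_sqrt; auto).
      assert (HE' : Eh m n a1 b1' a2 b2 = E - m*E1) by (unfold E, Eh, E1; rewrite Hb1'; field).
      assert (HmE : 0 <= -(m*E1)*L^2 <= g/2).
      { split. apply Rmult_le_pos; [nra|lra].
        assert (-(m*E1) <= g/4) by nra. 
        assert (-(m*E1)*L^2 <= (g/4)*2) by (apply Rmult_le_compat; nra). lra. }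
      destruct (Rlt_dec (Eh m n a1 b1' a2 b2) 0) as [Hn'|Hn'].
      * assert (H0 : 0 <= (a1^2+b1'^2)/2-1) by (rewrite Hb1'; lra).
        specialize (P1 a1 b1' a2 b2 H0 Hn'). fold L in P1. rewrite HE' in P1.
        assert ((E - m*E1)*L^2 = E*L^2 + (-(m*E1)*L^2)) by field. lra.
      * apply Rnot_lt_le in Hn'. rewrite HE' in Hn'.
        assert (0 <= (E - m*E1)*L^2) by (apply Rmult_le_pos; lra).
        assert ((E - m*E1)*L^2 = E*L^2 + (-(m*E1)*L^2)) by field. lra.
  - apply Rnot_le_lt in Hc.
    assert (Ha1s : a1^2 * (g/4) <= a1^2 * (-E1)) by (apply Rmult_le_compat_l; lra).
    assert (Ha1b : a1^2 < g^2/400).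
    { assert (a1^2*(g/4) < g^3/1600) by nra.
      apply Rmult_lt_reg_r with (g/4); [lra|]. 
      replace (g^2/400*(g/4)) with (g^3/1600) by field. lra. }
    assert (Habs : Rabs a1 < g/20).
    { apply Rnot_le_lt. intro Hc'. 
      assert ((g/20)*(g/20) <= Rabs a1 * Rabs a1) by (apply Rmult_le_compat; lra).
      rewrite <- Rabs_mult, Rabs_pos_eq in H by nra. nra. }
    assert (HLabs : Rabs L < 2).
    { apply Rnot_le_lt. intro Hc'.
      assert (2*2 <= Rabs L * Rabs L) by (apply Rmult_le_compat; lra).
      rewrite <- Rabs_mult, Rabs_pos_eq in H by nra. nra. }
    set (E'' := Eh m n 0 b1 a2 b2).
    assert (HE'' : E'' = E - m*a1^2/2) by (unfold E'', E, Eh; field).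
    assert (HL'' : Lh m n 0 a2 = L - m*a1) by (unfold L, Lh; field).
    assert (HS'' : S <= E'' * (Lh m n 0 a2)^2).
    { destruct (Rlt_dec E'' 0) as [Hn'|Hn'].
      - apply P2; auto.
      - apply Rnot_lt_le in Hn'. assert (0 <= E'' * (Lh m n 0 a2)^2) by (apply Rmult_le_pos; auto; apply pow2_ge_0). lra. }
    rewrite HL'' in HS''.
    assert (HL''0 : 0 <= (L - m*a1)^2) by apply pow2_ge_0.
    assert (E''*(L - m*a1)^2 <= E*(L - m*a1)^2) by (apply Rmult_le_compat_r; nra).
    assert (Hdiff : E*(L - m*a1)^2 - E*L^2 = E*(m^2*a1^2) + (-E)*(2*L*m*a1)) by field.
    assert (Ht1 : E*(m^2*a1^2) <= 0) by (assert (0 <= m^2*a1^2) by nra; nra).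
    assert (Ht2 : (-E)*(2*L*m*a1) <= g/5).
    { eapply Rle_trans; [apply Rle_abs|].
      rewrite !Rabs_mult, (Rabs_pos_eq (-E)) by lra.
      rewrite (Rabs_pos_eq 2) by lra. rewrite (Rabs_pos_eq m) by lra.
      assert (0 <= Rabs L) by apply Rabs_pos. assert (0 <= Rabs a1) by apply Rabs_pos.
      assert (2 * Rabs L * m * Rabs a1 <= 2*2*1*(g/20)).
      { apply Rmult_le_compat; nra. }
      assert (Hm1 : m <= 1) by lra.
      assert (0 <= 2 * Rabs L * m * Rabs a1) by (apply Rmult_le_pos; [apply Rmult_le_pos|]; nra).
      assert (-E * (2 * Rabs L * m * Rabs a1) <= 1 * (2 * Rabs L * m * Rabs a1)) by (apply Rmult_le_compat_r; lra).
      lra. }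
    lra.
Qed.

Lemma on_orbit_cons x v y u : on_orbit x v y u ->
  x <> (0,0) /\ y <> (0,0) /\ energy y u = energy x v /\ angmom y u = angmom x v.
Proof.
  intros (a & b & t & y1 & y2 & u1 & u2 & Hab & Ht & Hk & Hx & Hv & Hy & Hu).
  destruct (kepler_conserve y1 y2 u1 u2 a b t Hk Hab Ht) as [He Hl].
  subst. repeat split; auto.
  - apply (Hk 0); lra.
  - apply (Hk t); lra.
Qed.

Lemma norm_pair (mu1 mu2 : R) (y u1 u2 : vec) : y <> (0,0) ->
  exists r a1 b1 a2 b2, 0 < r /\
    (a1^2+b1^2)/2 - 1 = r * energy y u1 /\ (a2^2+b2^2)/2 - 1 = r * energy y u2 /\
    (angmom y u1)^2 = r * a1^2 /\ (angmom y u2)^2 = r * a2^2 /\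
    Eh mu1 mu2 a1 b1 a2 b2 = r * (mu1 * energy y u1 + mu2 * energy y u2) /\
    Eh mu1 mu2 a1 b1 a2 b2 * (Lh mu1 mu2 a1 a2)^2 =
      (mu1 * energy y u1 + mu2 * energy y u2) * (mu1 * angmom y u1 + mu2 * angmom y u2)^2.
Proof.
  intros Hy. destruct y as [Y1 Y2], u1 as [p1 q1], u2 as [p2 q2].
  set (r := vnorm (Y1,Y2)).
  assert (Hq : 0 < Y1*Y1 + Y2*Y2).
  { destruct (Req_dec Y1 0); destruct (Req_dec Y2 0).
    - exfalso; apply Hy; subst; reflexivity.
    - nra. - nra. - nra. }
  assert (Hr : 0 < r) by (unfold r, vnorm, dot; simpl; apply sqrt_lt_R0; lra).
  assert (Hr2 : r*r = Y1*Y1+Y2*Y2) by (unfold r, vnorm, dot; simpl; apply sqrt_sqrt; lra).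
  set (sr := sqrt r).
  assert (Hsr : 0 < sr) by (unfold sr; apply sqrt_lt_R0; lra).
  assert (Hsr2 : sr*sr = r) by (unfold sr; apply sqrt_sqrt; lra).
  set (L1 := Y1*q1 - Y2*p1). set (L2 := Y1*q2 - Y2*p2).
  set (P1 := Y1*p1 + Y2*q1). set (P2 := Y1*p2 + Y2*q2).
  assert (Lag1 : L1^2 + P1^2 = r*r*(p1*p1+q1*q1)) by (rewrite Hr2; unfold L1, P1; ring).
  assert (Lag2 : L2^2 + P2^2 = r*r*(p2*p2+q2*q2)) by (rewrite Hr2; unfold L2, P2; ring).
  assert (Ee1 : energy (Y1,Y2) (p1,q1) = (p1*p1+q1*q1)/2 - 1/r) by (unfold energy, dot; simpl; reflexivity).
  assert (Ee2 : energy (Y1,Y2) (p2,q2) = (p2*p2+q2*q2)/2 - 1/r) by (unfold energy, dot; simpl; reflexivity).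
  assert (Ea1 : angmom (Y1,Y2) (p1,q1) = L1) by reflexivity.
  assert (Ea2 : angmom (Y1,Y2) (p2,q2) = L2) by reflexivity.
  rewrite Ee1, Ee2, Ea1, Ea2.
  assert (N1 : ((L1/sr)^2 + (P1/sr)^2)/2 - 1 = r*((p1*p1+q1*q1)/2 - 1/r)).
  { replace ((L1/sr)^2 + (P1/sr)^2) with ((L1^2 + P1^2)/(sr*sr)) by (field; lra).
    rewrite Lag1, Hsr2. field. lra. }
  assert (N2 : ((L2/sr)^2 + (P2/sr)^2)/2 - 1 = r*((p2*p2+q2*q2)/2 - 1/r)).
  { replace ((L2/sr)^2 + (P2/sr)^2) with ((L2^2 + P2^2)/(sr*sr)) by (field; lra).
    rewrite Lag2, Hsr2. field. lra. }
  exists r, (L1/sr), (P1/sr), (L2/sr), (P2/sr).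
  assert (EhE : Eh mu1 mu2 (L1/sr) (P1/sr) (L2/sr) (P2/sr) =
     r * (mu1 * ((p1*p1+q1*q1)/2 - 1/r) + mu2 * ((p2*p2+q2*q2)/2 - 1/r))).
  { unfold Eh. rewrite N1, N2. field. lra. }
  repeat split; auto.
  - replace (r*(L1/sr)^2) with (L1^2 * (r/(sr*sr))) by (field; lra). rewrite Hsr2. field. lra.
  - replace (r*(L2/sr)^2) with (L2^2 * (r/(sr*sr))) by (field; lra). rewrite Hsr2. field. lra.
  - rewrite EhE. unfold Lh.
    replace ((mu1 * (L1 / sr) + mu2 * (L2 / sr)) ^ 2) with ((mu1*L1+mu2*L2)^2/(sr*sr)) by (field; lra).
    rewrite Hsr2. field. lra.
Qed.

Lemma pair_bound (mu1 mu2 E0 K : R) (y u1 u2 : vec) :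
  0 < mu1 -> 0 < mu2 -> mu1 + mu2 = 1 -> mu1 <= mu2 -> y <> (0,0) -> E0 < 0 ->
  K < sigma_crit mu1 mu2 ->
  mu1 * energy y u1 + mu2 * energy y u2 <= E0 ->
  (mu1 * energy y u1 + mu2 * energy y u2) * (mu1 * angmom y u1 + mu2 * angmom y u2)^2 <= K ->
  (energy y u1 < 0 /\ energy y u1 * (angmom y u1)^2 <= - (sigma_crit mu1 mu2 - K)^3/1600 /\
     (angmom y u1)^2 <= 2/(-E0)) /\
  (energy y u2 < 0 /\ energy y u2 * (angmom y u2)^2 <= - (sigma_crit mu1 mu2 - K)^3/1600 /\
     (angmom y u2)^2 <= 2/(-E0)).
Proof.
  intros H1 H2 H12 Hle Hy HE0 HK HE HEL.
  destruct (norm_pair mu1 mu2 y u1 u2 Hy) as (r & a1 & b1 & a2 & b2 & Hr & N1 & N2 & A1 & A2 & EhE & EhL).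
  set (sig := sigma_crit mu1 mu2) in *.
  set (d := (sig - K)^3/1600).
  assert (Hd : 0 < d) by (unfold d; assert (0 < sig - K) by lra; assert (0 < (sig-K)^3) by (apply pow_lt; lra); lra).
  assert (Hsh : sig <= - mu2/2) by (apply sig_half; auto).
  set (e1 := energy y u1) in *. set (e2 := energy y u2) in *.
  set (l1 := angmom y u1) in *. set (l2 := angmom y u2) in *.
  assert (HEhneg : Eh mu1 mu2 a1 b1 a2 b2 < 0) by (rewrite EhE; nra).
  assert (HEhL : Eh mu1 mu2 a1 b1 a2 b2 * (Lh mu1 mu2 a1 a2)^2 <= K) by (rewrite EhL; auto).
  assert (Hsig0 : sig <= 0) by lra.
  assert (Hb1 : 0 <= b1^2) by apply pow2_ge_0.
  assert (Hb2 : 0 <= b2^2) by apply pow2_ge_0.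
  assert (Ha1 : 0 <= a1^2) by apply pow2_ge_0.
  assert (Ha2 : 0 <= a2^2) by apply pow2_ge_0.
  assert (Q1 : ((a1^2+b1^2)/2-1) * a1^2 <= - (sig-K)^3/1600).
  { apply (quant mu1 mu2 sig K a1 b1 a2 b2); auto.
    - intros c1 d1 c2 d2 Hc HEc.
      destruct (keygen mu1 mu2 c1 d1 c2 d2 H1 H2 H12 Hc HEc) as [s [Hs Hs2]].
      eapply Rle_trans; [apply (sig_f1 mu1 mu2 H1 H2 s Hs)|exact Hs2].
    - intros d1 c2 d2 HEc.
      eapply Rle_trans; [exact Hsh|]. apply azero; auto. }
  assert (Sw : Eh mu2 mu1 a2 b2 a1 b1 = Eh mu1 mu2 a1 b1 a2 b2) by (unfold Eh; lra).
  assert (SwL : Lh mu2 mu1 a2 a1 = Lh mu1 mu2 a1 a2) by (unfold Lh; lra).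
  assert (Q2 : ((a2^2+b2^2)/2-1) * a2^2 <= - (sig-K)^3/1600).
  { apply (quant mu2 mu1 sig K a2 b2 a1 b1); try rewrite Sw; auto; try lra.
    - intros c1 d1 c2 d2 Hc HEc.
      destruct (keygen mu2 mu1 c1 d1 c2 d2 H2 H1 ltac:(lra) Hc HEc) as [s [Hs Hs2]].
      eapply Rle_trans; [apply (sig_f2 mu1 mu2 H1 H2 H12 Hle s Hs)|exact Hs2].
    - intros d1 c2 d2 HEc.
      eapply Rle_trans; [|apply azero; auto; lra]. lra.
    - rewrite SwL; auto. }
  assert (Hdd : d = (sig - K)^3/1600) by reflexivity.
  assert (Hlow : -1 <= Eh mu1 mu2 a1 b1 a2 b2) by (unfold Eh; nra).
  assert (HrE : r * (-E0) <= 1).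
  { rewrite EhE in Hlow. nra. }
  assert (Hr' : 2*r <= 2/(-E0)).
  { apply Rmult_le_reg_r with (-E0); [lra|]. field_simplify; lra. }
  assert (P1 : e1 * l1^2 = ((a1^2+b1^2)/2-1) * a1^2) by (rewrite N1, A1; field; lra).
  assert (P2 : e2 * l2^2 = ((a2^2+b2^2)/2-1) * a2^2) by (rewrite N2, A2; field; lra).
  assert (He1 : e1 < 0).
  { destruct (Rlt_dec e1 0) as [|Hn]; auto. exfalso. apply Rnot_lt_le in Hn.
    assert (0 <= e1 * l1^2) by (apply Rmult_le_pos; [lra|apply pow2_ge_0]). lra. }
  assert (He2 : e2 < 0).
  { destruct (Rlt_dec e2 0) as [|Hn]; auto. exfalso. apply Rnot_lt_le in Hn.
    assert (0 <= e2 * l2^2) by (apply Rmult_le_pos; [lra|apply pow2_ge_0]). lra. }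
  assert (Ha1' : a1^2 < 2) by nra.
  assert (Ha2' : a2^2 < 2) by nra.
  repeat split; try lra.
  - rewrite A1. nra.
  - rewrite A2. nra.
Qed.

Lemma collision_props (mu1 mu2 eps : R) (s s' : state) :
  0 < mu1 -> 0 < mu2 -> mu1 + mu2 = 1 -> 0 <= eps <= 1/2 ->
  collision_step mu1 mu2 eps s s' ->
  x1 s' <> (0,0) /\ x2 s' = x1 s' /\
  Etot mu1 mu2 s' <= Etot mu1 mu2 s /\ Ltot mu1 mu2 s' = Ltot mu1 mu2 s.
Proof.
  intros H1 H2 H12 Heps (y & u1 & u2 & n & O1 & O2 & Hn & Hneg & Heq).
  cbv zeta in Heq. subst s'.
  destruct (on_orbit_cons _ _ _ _ O1) as (_ & Hy & Ee1 & La1).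
  destruct (on_orbit_cons _ _ _ _ O2) as (_ & _ & Ee2 & La2).
  unfold Etot, Ltot, En1, En2, Lm1, Lm2. simpl.
  rewrite <- Ee1, <- Ee2, <- La1, <- La2.
  repeat split; auto.
  - destruct y as [Y1 Y2], u1 as [p1 q1], u2 as [p2 q2], n as [n1 n2].
    unfold energy, dot, vadd, vsub, vscale in *; simpl in *.
    set (c := 1 / vnorm (Y1, Y2)).
    set (nw := n1 * (p1 - p2) + n2 * (q1 - q2)).
    assert (Hm2 : mu2 = 1 - mu1) by lra.
    assert (Hk : 0 <= mu1*mu2*eps*(2-2*eps)*nw^2).
    { apply Rmult_le_pos; [|apply pow2_ge_0]. apply Rmult_le_pos; [|lra].
      apply Rmult_le_pos; [nra|lra]. }
    rewrite Hm2 in Hk |- *.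
    set (a := 1 - 2*eps) in *.
    match goal with |- ?A <= ?B => assert (Hid : B - A = (1-mu1)*mu1*eps*(2-2*eps)*nw^2 * (n1*n1+n2*n2)
       + (1-mu1)*mu1*nw^2*(2-2*eps)*(1 - (n1*n1+n2*n2))) end.
    { unfold a, nw. field. }
    rewrite Hn in Hid. lra.
  - destruct y as [Y1 Y2], u1 as [p1 q1], u2 as [p2 q2], n as [n1 n2].
    unfold angmom, dot, vadd, vsub, vscale in *; simpl in *.
    replace mu2 with (1 - mu1) by lra. ring.
Qed.

Lemma reach_inv (mu1 mu2 eps : R) (s0 : state) :
  0 < mu1 -> 0 < mu2 -> mu1 + mu2 = 1 -> 0 <= eps <= 1/2 ->
  orbits_intersect s0 ->
  forall s, reachable mu1 mu2 eps s0 s ->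
    Etot mu1 mu2 s <= Etot mu1 mu2 s0 /\ Ltot mu1 mu2 s = Ltot mu1 mu2 s0 /\
    exists y u1 u2, y <> (0,0) /\ energy y u1 = En1 s /\ energy y u2 = En2 s /\
      angmom y u1 = Lm1 s /\ angmom y u2 = Lm2 s.
Proof.
  intros H1 H2 H12 Heps Hint s Hr. induction Hr as [|s s' Hr IH Hst].
  - split; [lra|]. split; [reflexivity|].
    destruct Hint as (y & u1 & u2 & O1 & O2).
    destruct (on_orbit_cons _ _ _ _ O1) as (_ & Hy & Ee1 & La1).
    destruct (on_orbit_cons _ _ _ _ O2) as (_ & _ & Ee2 & La2).
    exists y, u1, u2. unfold En1, En2, Lm1, Lm2. auto.
  - destruct IH as (IE & IL & _).
    destruct (collision_props mu1 mu2 eps s s' H1 H2 H12 Heps Hst) as (Hnz & Hx & HE & HL).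
    split; [lra|]. split; [congruence|].
    exists (x1 s'), (v1 s'), (v2 s'). unfold En1, En2, Lm1, Lm2. rewrite Hx. auto.
Qed.

Theorem theorem1 (mu1 mu2 eps : R) (s0 : state) :
  0 < mu1 -> 0 < mu2 -> mu1 + mu2 = 1 -> mu1 <= mu2 ->
  0 <= eps <= 1 / 2 ->
  x1 s0 <> (0, 0) -> x2 s0 <> (0, 0) ->
  En1 s0 < 0 -> En2 s0 < 0 ->
  orbits_intersect s0 ->
  Etot mu1 mu2 s0 < 0 ->
  Etot mu1 mu2 s0 * (Ltot mu1 mu2 s0) ^ 2 < sigma_crit mu1 mu2 ->
  exists (B c1 c2 : R), c1 < 1 /\ c2 < 1 /\
    forall s, reachable mu1 mu2 eps s0 s ->
      En1 s < 0 /\ En2 s < 0 /\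
      Rabs (Lm1 s) <= B /\ Rabs (Lm2 s) <= B /\
      ecc1 s <= c1 /\ ecc2 s <= c2.
Proof.
  intros H1 H2 H12 Hle Heps _ _ _ _ Hint HE0 HK.
  set (E0 := Etot mu1 mu2 s0) in *. set (L0 := Ltot mu1 mu2 s0) in *.
  set (K := E0 * L0^2) in *.
  set (d := (sigma_crit mu1 mu2 - K)^3/1600).
  assert (Hd : 0 < d) by (unfold d; assert (0 < sigma_crit mu1 mu2 - K) by lra;
     assert (0 < (sigma_crit mu1 mu2 - K)^3) by (apply pow_lt; lra); lra).
  set (c := sqrt (1 + 2*(-d))).
  assert (Hc : c < 1).
  { unfold c. destruct (Rle_dec (1 + 2*(-d)) 0) as [Hn|Hn].
    - rewrite sqrt_neg_0; lra.
    - apply Rnot_le_lt in Hn. apply Rlt_le_trans with (sqrt 1); [apply sqrt_lt_1_alt; lra | rewrite sqrt_1; lra]. }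
  exists (sqrt (2/(-E0))), c, c. split; [exact Hc|]. split; [exact Hc|].
  intros s Hs.
  destruct (reach_inv mu1 mu2 eps s0 H1 H2 H12 Heps Hint s Hs) as (IE & IL & y & u1 & u2 & Hy & Ee1 & Ee2 & La1 & La2).
  assert (HEs : mu1 * energy y u1 + mu2 * energy y u2 <= E0) by (rewrite Ee1, Ee2; exact IE).
  assert (HELs : (mu1 * energy y u1 + mu2 * energy y u2) * (mu1 * angmom y u1 + mu2 * angmom y u2)^2 <= K).
  { rewrite Ee1, Ee2, La1, La2. fold (Ltot mu1 mu2 s). rewrite IL. fold L0.
    unfold K. apply Rmult_le_compat_r; [apply pow2_ge_0|exact IE]. }
  destruct (pair_bound mu1 mu2 E0 K y u1 u2 H1 H2 H12 Hle Hy HE0 HK HEs HELs)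
    as ((B1 & C1 & D1) & (B2 & C2 & D2)).
  rewrite Ee1 in B1, C1. rewrite La1 in C1, D1. rewrite Ee2 in B2, C2. rewrite La2 in C2, D2.
  fold d in C1, C2.
  repeat split; auto.
  - rewrite <- sqrt_Rsqr_abs. apply sqrt_le_1_alt. rewrite Rsqr_pow2. exact D1.
  - rewrite <- sqrt_Rsqr_abs. apply sqrt_le_1_alt. rewrite Rsqr_pow2. exact D2.
  - unfold ecc1, ecc, c. apply sqrt_le_1_alt. fold (En1 s) (Lm1 s).
    assert (Hdd : d = (sigma_crit mu1 mu2 - K)^3/1600) by reflexivity.
    replace (2*En1 s*Lm1 s^2) with (2*(En1 s*Lm1 s^2)) by ring. lra.
  - unfold ecc2, ecc, c. apply sqrt_le_1_alt. fold (En2 s) (Lm2 s).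
    assert (Hdd : d = (sigma_crit mu1 mu2 - K)^3/1600) by reflexivity.
    replace (2*En2 s*Lm2 s^2) with (2*(En2 s*Lm2 s^2)) by ring. lra.
Qed.
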